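(* Let $k$ be a finite field, $n\ge1$, and $F=T_0G_1+G_0\in k[T_0,\dots,T_n]$ nonzero homogeneous with $G_0,G_1\in k[T_1,\dots,T_n]$ homogeneous and $G_1\ne0$. Then there is a natural bijection \[ X_F(k)=\mathrm{Cone}_p(X_{G_1}\cap X_{G_0})(k)\ \sqcup\ \bigl(\mathbb{P}^{n-1}_k(k)-X_{G_1}(k)\bigr). \]
   Context: $X_F=\mathrm{Proj}\,k[T_0,\dots,T_n]/(F)$, $X_{G_1}=\mathrm{Proj}\,k[T_1,\dots,T_n]/(G_1)\subseteq\mathbb{P}^{n-1}_k=\mathrm{Proj}\,k[T_1,\dots,T_n]$, and $X_{G_1}\cap X_{G_0}=\mathrm{Proj}\,k[T_1,\dots,T_n]/(G_1,G_0)$. For $X=\mathrm{Proj}\,k[T_1,\dots,T_n]/I$, the projective cone with vertex $p=[1:0:\dots:0]$ is $\mathrm{Cone}_p(X)=\mathrm{Proj}\,k[T_0,T_1,\dots,T_n]/I\,k[T_0,\dots,T_n]$. $Y(k)$ denotes the set of $k$-rational points of $Y$. *)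

(* Defs.v *)
From HB Require Import structures.
From mathcomp Require Import all_boot all_order all_algebra all_field.
From mathcomp Require Import mpoly.
Set Implicit Arguments. Unset Strict Implicit. Unset Printing Implicit Defensive.
Import Order.TTheory GRing.Theory.
Local Open Scope ring_scope.

Section Proj.
Variable k : fieldType.

(* A vector of k^m is normalized if its first nonzero coordinate equals 1.
   Normalized vectors are the canonical representatives of the points of
   P^{m-1}(k) = (k^m - 0)/k^*. *)
Definition normalized m (x : {ffun 'I_m -> k}) : bool :=
  [exists i : 'I_m, (x i == 1) && [forall j : 'I_m, (j < i)%N ==> (x j == 0)]].

Definition proj_pts m := {x : {ffun 'I_m -> k} | normalized x}.

(* Vanishing of a polynomial at a point (well defined for homogeneous
   polynomials, since the representative is fixed). *)
Definition vanishes m (P : {mpoly k[m]}) (x : proj_pts m) : bool :=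
  P.@[fun i => val x i] == 0.

Definition tailv n (x : proj_pts n.+1) : 'I_n -> k :=
  fun i => val x (lift ord0 i).

(* The inclusion k[T_1,...,T_n] -> k[T_0,...,T_n], T_i |-> T_i
   (variable i of {mpoly k[n]} is sent to variable (lift ord0 i) = i+1). *)
Definition shift_mpoly n (G : {mpoly k[n]}) : {mpoly k[n.+1]} :=
  mmap (@mpolyC n.+1 k) (fun i => 'X_(lift ord0 i)) G.

Definition XF_pts n (F : {mpoly k[n.+1]}) := {x : proj_pts n.+1 | vanishes F x}.

(* Cone_p(X)(k), for X = Proj k[T_1..T_n]/I with I generated by the finite
   list Is of homogeneous polynomials: points of P^n_k whose last n
   coordinates are a zero of every generator. *)
Definition cone_pts n (Is : seq {mpoly k[n]}) :=
  {x : proj_pts n.+1 | all (fun G => G.@[tailv x] == 0) Is}.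

Definition compl_pts n (G : {mpoly k[n]}) := {y : proj_pts n | ~~ vanishes G y}.

End Proj.

(* Main.v *)
Require Import Defs.
From HB Require Import structures.
From mathcomp Require Import all_boot all_order all_algebra all_field.
From mathcomp Require Import mpoly.
Set Implicit Arguments. Unset Strict Implicit.
Import GRing.Theory.
Local Open Scope ring_scope.

Section Helpers.
Variable k : fieldType.

Lemma shift_eval n (G : {mpoly k[n]}) (w : 'I_n.+1 -> k) :
  (shift_mpoly G).@[w] = G.@[fun i => w (lift ord0 i)].
Proof.
rewrite /shift_mpoly /mmap raddf_sum /= mevalE.
apply: eq_bigr => m _.
rewrite mevalM mevalC rmorph_prod /=; congr (_ * _).
by apply: eq_bigr => i _; rewrite rmorphXn /= mevalXU.
Qed.

Lemma homog_eval n (P : {mpoly k[n]}) d c (w : 'I_n -> k) :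
  P \is d.-homog -> P.@[fun i => c * w i] = c ^+ d * P.@[w].
Proof.
move=> /dhomogP hP; rewrite !mevalE mulr_sumr.
apply: eq_big_seq => m /hP <-.
rewrite (eq_bigr (fun i => c ^+ m i * w i ^+ m i)); last by move=> i _; rewrite exprMn.
by rewrite big_split /= prodrXr mdegE mulrCA; congr (_ * _).
Qed.

Lemma normalized_uniq m (u v : {ffun 'I_m -> k}) c :
  normalized u -> normalized v -> (forall i, u i = c * v i) -> u = v.
Proof.
move=> /existsP[i /andP[/eqP ui /forallP hu]] /existsP[j /andP[/eqP vj /forallP hv]] h.
have eij : i = j.
  case: (ltngtP i j) => [lt|lt|e]; last exact: val_inj.
  - have := hv i; rewrite lt /= => /eqP vi0.
    by move: ui; rewrite h vi0 mulr0 => /eqP; rewrite eq_sym oner_eq0.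
  - have := hu j; rewrite lt /= => /eqP uj0.
    move: uj0; rewrite h vj mulr1 => c0.
    by move: ui; rewrite h c0 mul0r => /eqP; rewrite eq_sym oner_eq0.
have c1 : c = 1 by move: ui; rewrite h eij vj mulr1.
by apply/ffunP => x; rewrite h c1 mul1r.
Qed.

Definition fnz m (v : {ffun 'I_m -> k}) : option 'I_m :=
  [pick i | (v i != 0) && [forall j : 'I_m, (j < i)%N ==> (v j == 0)]].

Definition nrm m (v : {ffun 'I_m -> k}) : {ffun 'I_m -> k} :=
  [ffun i => (match fnz v with Some i0 => (v i0)^-1 | None => 1 end) * v i].

Lemma nrm_spec m (v : {ffun 'I_m -> k}) :
  (exists2 c, c != 0 & forall i, nrm v i = c * v i) /\ (v != 0 -> normalized (nrm v)).
Proof.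
rewrite /nrm /fnz; case: pickP => [i0 /andP[vi0 /forallP hi0]|none].
  split.
    by exists (v i0)^-1 => [|i]; rewrite ?invr_eq0 // ffunE.
  move=> _; apply/existsP; exists i0; rewrite ffunE mulVf // eqxx /=.
  apply/forallP => j; apply/implyP => ji; rewrite ffunE.
  by have := hi0 j; rewrite ji /= => /eqP ->; rewrite mulr0.
split; first by exists 1 => [|i]; rewrite ?oner_eq0 // ffunE.
move=> vnz; exfalso.
have [i vi] : exists i, v i != 0.
  apply/existsP; move: vnz; apply: contraR; rewrite negb_exists => /forallP h.
  by apply/eqP/ffunP => i; rewrite ffunE; apply/eqP; have := h i; rewrite negbK.
case: (@arg_minnP _ i (fun j => v j != 0) (fun j => nat_of_ord j) vi) => j vj hj.
have := none j; rewrite vj /=; move/negP; apply; apply/forallP => l; apply/implyP => lj.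
apply/negPn/negP => vl; have := hj l vl; by rewrite leqNgt lj.
Qed.
End Helpers.

Unset Implicit Arguments.
From Stdlib Require Import ClassicalEpsilon.

Theorem proposition5p5 (k : finFieldType) (n : nat) (n_ge1 : (1 <= n)%N)
    (F : {mpoly k[n.+1]}) (G0 G1 : {mpoly k[n]}) :
    F != 0 -> (exists d, F \is d.-homog) ->
    (exists d, G0 \is d.-homog) -> (exists d, G1 \is d.-homog) ->
    G1 != 0 ->
    F = 'X_ord0 * shift_mpoly G1 + shift_mpoly G0 ->
    exists f : XF_pts F -> cone_pts [:: G1; G0] + compl_pts G1,
      bijective f /\
      (forall x : XF_pts F,
        match f x with
        | inl c => val (val c) = val (val x)
        | inr y => exists a : k, a != 0 /\
                     forall i : 'I_n, val (val y) i = a * tailv (val x) i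
        end).
Proof.
move=> Fnz [d Fh] _ [d1 G1h] G1nz FE.
have Feval : forall w : 'I_n.+1 -> k, F.@[w] =
    w ord0 * G1.@[fun i => w (lift ord0 i)] + G0.@[fun i => w (lift ord0 i)].
  by move=> w; rewrite FE mevalD mevalM mevalXU !shift_eval.
have Fhom : forall c (w : 'I_n.+1 -> k), F.@[fun i => c * w i] = c ^+ d * F.@[w].
  by move=> c w; apply: homog_eval.
have G1hom : forall c (w : 'I_n -> k), G1.@[fun i => c * w i] = c ^+ d1 * G1.@[w].
  by move=> c w; apply: homog_eval.
have XF0 : forall x : XF_pts F, F.@[fun i => val (val x) i] = 0.
  by move=> x; apply/eqP; exact: (valP x).
have tailnz : forall x : XF_pts F, G1.@[tailv (val x)] != 0 ->
    [ffun i => tailv (val x) i] != 0.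
  move=> x hG; apply/negP => /eqP t0.
  have tz : forall i, tailv (val x) i = 0.
    by move=> i; have := congr1 (fun g : {ffun 'I_n -> k} => g i) t0; rewrite !ffunE.
  set w := fun i => val (val x) i.
  have w0 : w ord0 != 0.
    have /existsP[i /andP[/eqP wi _]] := valP (val x).
    case: (unliftP ord0 i) wi => [j ->|->]; last by rewrite /w => ->; rewrite oner_eq0.
    by have := tz j; rewrite /tailv => -> /eqP; rewrite eq_sym oner_eq0.
  have E c : c * w ord0 * G1.@[fun _ => 0] + G0.@[fun _ => 0] = 0.
    have := Fhom c w; rewrite XF0 mulr0 Feval.
    have tzw : (fun i => c * w (lift ord0 i)) =1 (fun _ => 0).
      by move=> i; rewrite /w -/(tailv _ i) tz mulr0.
    by rewrite !(meval_eq _ tzw).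
  have E0 := E 0; rewrite !mul0r add0r in E0.
  have E1 := E 1; rewrite E0 addr0 mul1r in E1.
  move: hG; rewrite (@meval_eq _ _ (tailv (val x)) (fun _ => 0)) //.
  by move: E1 => /eqP; rewrite mulf_eq0 (negbTE w0) /= => ->.
pose spec (x : XF_pts F) (r : cone_pts [:: G1; G0] + compl_pts G1) :=
  match r with
  | inl c => val (val c) = val (val x)
  | inr y => G1.@[tailv (val x)] != 0 /\ exists a : k, a != 0 /\
             forall i : 'I_n, val (val y) i = a * tailv (val x) i
  end.
have fdef : forall x : XF_pts F, {r | spec x r}.
  move=> x; case: (boolP (G1.@[tailv (val x)] == 0)) => hG.
    have hc : all (fun G => G.@[tailv (val x)] == 0) [:: G1; G0].
      rewrite /= hG /= andbT; move: (XF0 x); rewrite Feval.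
      by rewrite -/(tailv _) (eqP hG) mulr0 add0r => ->.
    by exists (inl (exist _ (val x) hc)).
  set v := [ffun i => tailv (val x) i].
  have hv := (nrm_spec v).2 (tailnz x hG).
  have hy : ~~ vanishes G1 (exist _ (nrm v) hv).
    have [c c0 hc] := (nrm_spec v).1.
    rewrite /vanishes /=.
    have e : (fun i => nrm v i) =1 (fun i => c * tailv (val x) i).
      by move=> i; rewrite hc ffunE.
    by rewrite (meval_eq _ e) G1hom mulf_eq0 negb_or expf_eq0 (negbTE c0) andbF.
  exists (inr (exist _ (exist _ (nrm v) hv) hy)); split => //.
  have [c c0 hc] := (nrm_spec v).1.
  by exists c; split => // i; rewrite /= hc ffunE.
pose f x := sval (fdef x).
have fP x : spec x (f x) := svalP (fdef x).
have Fx : forall x : XF_pts F,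
    val (val x) ord0 * G1.@[tailv (val x)] + G0.@[tailv (val x)] = 0.
  by move=> x; move: (XF0 x); rewrite Feval.
have finj : injective f.
  move=> x1 x2 e; have := fP x1; have := fP x2; rewrite -e.
  case: (f x1) => [c|y] /=.
    by move=> h2 h1; apply: val_inj; apply: val_inj; exact: (etrans (esym h1) h2).
  move=> [h2 [a2 [a20 e2]]] [h1 [a1 [a10 e1]]].
  pose cc := a2 / a1.
  have cc0 : cc != 0 by rewrite /cc mulf_neq0 ?invr_eq0.
  have ht : forall i, cc * tailv (val x2) i = tailv (val x1) i.
    by move=> i; rewrite /cc mulrAC -e2 e1 mulrC mulKf.
  pose w := fun i => cc * val (val x2) i.
  have Fw : F.@[w] = 0 by rewrite /w Fhom XF0 mulr0.
  rewrite Feval (meval_eq _ ht) (meval_eq _ ht) in Fw.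
  have hx0 : val (val x1) ord0 = cc * val (val x2) ord0.
    have := Fx x1; rewrite -Fw => /eqP; rewrite (can_eq (addrK _)) => /eqP.
    by move/(mulIf h1).
  have hall : forall i, val (val x1) i = cc * val (val x2) i.
    move=> i; case: (unliftP ord0 i) => [j ->|->] //.
    by rewrite -/(tailv _ j) -ht.
  apply: val_inj; apply: val_inj.
  exact: (normalized_uniq (valP (val x1)) (valP (val x2)) hall).
have fsurj : forall r, exists x, f x = r.
  case=> [c|y].
    move: (valP c) => /= /andP[/eqP g1 /andP[/eqP g0 _]].
    have hx : vanishes F (val c).
      by rewrite /vanishes Feval -/(tailv _) g1 g0 mulr0 addr0.
    exists (exist _ (val c) hx).
    have := fP (exist _ (val c) hx); case: (f _) => [c'|y] /=.
      by move=> h; congr inl; apply: val_inj; apply: val_inj; exact: h.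
    by move=> [h _]; move: h; rewrite g1 eqxx.
  have hy : G1.@[fun i => val (val y) i] != 0 := valP y.
  pose g1 := G1.@[fun i => val (val y) i].
  pose x0 := - G0.@[fun i => val (val y) i] / g1.
  pose v : {ffun 'I_n.+1 -> k} :=
    [ffun i => if unlift ord0 i is Some j then val (val y) j else x0].
  have vtail : forall j, v (lift ord0 j) = val (val y) j.
    by move=> j; rewrite ffunE liftK.
  have vnz : v != 0.
    have /existsP[j /andP[/eqP yj _]] := valP (val y).
    apply/eqP => v0; have := vtail j; rewrite v0 ffunE yj => /eqP.
    by rewrite eq_sym oner_eq0.
  have Fv : F.@[fun i => v i] = 0.
    rewrite Feval (meval_eq _ vtail) (meval_eq _ vtail) ffunE unlift_none.
    by rewrite /x0 -/g1 divfK // addNr.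
  have hv := (nrm_spec v).2 vnz.
  have hx : vanishes F (exist _ (nrm v) hv).
    have [c c0 hc] := (nrm_spec v).1.
    by rewrite /vanishes /= (meval_eq _ hc) Fhom Fv mulr0.
  exists (exist _ (exist _ (nrm v) hv) hx).
  have [c c0 hc] := (nrm_spec v).1.
  have := fP (exist _ (exist _ (nrm v) hv) hx); case: (f _) => [c'|y'] /=.
    move=> h0; have h : val (val c') = nrm v := h0.
    move: (valP c') => /= /andP[/eqP g1c _].
    have e : tailv (val c') =1 (fun i => c * val (val y) i).
      by move=> i; rewrite /tailv h hc vtail.
    move: g1c; rewrite (meval_eq _ e) G1hom => /eqP.
    by rewrite mulf_eq0 expf_eq0 (negbTE c0) andbF (negbTE hy).
  move=> [_ [a [a0 ha]]]; congr inr; apply: val_inj; apply: val_inj.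
  apply: (normalized_uniq (c := a * c) (valP (val y')) (valP (val y))).
  by move=> i; rewrite ha /tailv /= hc vtail mulrA.
pose g r := proj1_sig (constructive_indefinite_description _ (fsurj r)).
have fg r : f (g r) = r := proj2_sig (constructive_indefinite_description _ (fsurj r)).
exists f; split.
  by exists g => [x|r]; [apply: finj; rewrite fg | exact: fg].
move=> x; have := fP x; case: (f x) => [c|y] // [_ [a [a0 ha]]].
by exists a.
Qed.
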